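(* Let $k$ be a commutative ring, $R$ a reduced (not necessarily commutative) $k$-algebra and $\overline R=(R,\Gamma,\{R_\gamma\}_{\gamma\in\Gamma})$ a grid-grading of $R$ such that $X=\{\gamma\in\Gamma: R_\gamma\neq 0\}$ is finite. Then: (1) for each $\gamma\in X$, the subgrid $\langle\gamma\rangle$ of $\Gamma$ generated by $\gamma$ is contained in $X$ and is a finite cyclic group; (2) if $R_1$ is a domain, then for every $\gamma\in\Gamma$ every nonzero $x\in R_\gamma$ is regular (i.e. $xy=0$ or $yx=0$ implies $y=0$), and $X=\langle X\rangle$ is a group (under the restriction of $*$); if moreover $R$ is commutative, this group is abelian; (3) if $R_1$ is a field, then for every $\gamma\in\Gamma$ every nonzero $x\in R_\gamma$ is invertible in $R$ with $x^{-1}\in R_{\gamma^{-1}}$, and $\dim_{R_1}R_\gamma=1$ for all $\gamma\in X$ (viewing $R_\gamma$ as a left $R_1$-module).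
   Context: A grid is a quadruple $G=(S,1,D,* )$ where $S$ is a set containing $1$, $D\subseteq S^2$ contains $(1,s),(s,1)$ for all $s$, $*:D\to S$ satisfies $s*1=1*s=s$, and $s*s=s$ implies $s=1$. A subgrid of $G$ is a grid $(T,1,E,\star)$ with $T\subseteq S$, $E=D\cap T^2$ and $\star=*|_E$; $\langle Y\rangle$ denotes the smallest subgrid containing $Y\subseteq S$. A grid-grading of a $k$-algebra $R$ is a triple $(R,G,\{R_g\}_{g\in G})$ with $\{R_g\}$ a family of $k$-submodules such that $\bigoplus_g R_g\to R$ is an isomorphism, $1\in R_1$, and whenever $R_gR_h\ne0$ the product $g*h$ is defined and $R_gR_h\subseteq R_{g*h}$. $R_1$ is then a subalgebra. Reduced means no nonzero nilpotent elements. *)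

(* Defs.v *)
From Stdlib Require List.
From HB Require Import structures.
From mathcomp Require Import all_boot all_order all_algebra.
Set Implicit Arguments. Unset Strict Implicit. Unset Printing Implicit Defensive.
Import GRing.Theory.
Local Open Scope ring_scope.

(* A grid (S,1,D,* ) is encoded by a partial operation [op : S -> S -> option S]:
   D = {(s,t) | op s t <> None} and s*t = u iff op s t = Some u. *)
Definition is_grid (S : Type) (one : S) (op : S -> S -> option S) : Prop :=
  (forall s, op one s = Some s) /\ (forall s, op s one = Some s) /\
  (forall s, op s s = Some s -> s = one).

(* A subset T (containing 1) carries a subgrid structure (E = D ∩ T², ⋆ = *|_E)
   iff it contains 1 and is closed under the defined products. *)
Definition subgrid (S : Type) (one : S) (op : S -> S -> option S) (T : S -> Prop) : Prop :=
  T one /\ forall s t u, T s -> T t -> op s t = Some u -> T u.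

Definition gen_subgrid (S : Type) (one : S) (op : S -> S -> option S) (Y : S -> Prop) : S -> Prop :=
  fun s => forall T, subgrid one op T -> (forall y, Y y -> T y) -> T s.

Definition is_group_on (S : Type) (one : S) (op : S -> S -> option S) (T : S -> Prop) : Prop :=
  T one /\
  (forall a b, T a -> T b -> exists c, op a b = Some c /\ T c) /\
  (forall a b c ab bc, T a -> T b -> T c -> op a b = Some ab -> op b c = Some bc ->
      op ab c = op a bc) /\
  (forall a, T a -> exists b, T b /\ op a b = Some one /\ op b a = Some one).

Definition is_abelian_on (S : Type) (op : S -> S -> option S) (T : S -> Prop) : Prop :=
  forall a b, T a -> T b -> op a b = op b a.

Fixpoint gpow (S : Type) (one : S) (op : S -> S -> option S) (g : S) (m : nat) : option S :=
  match m with
  | 0%N => Some one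
  | m'.+1 => match gpow one op g m' with Some x => op x g | None => None end
  end.

Definition finite_set (S : Type) (T : S -> Prop) : Prop :=
  exists l : seq S, forall s, T s -> List.In s l.

Definition is_cyclic_on (S : Type) (one : S) (op : S -> S -> option S) (T : S -> Prop) : Prop :=
  exists g, T g /\ forall t, T t -> exists m, gpow one op g m = Some t.

Definition grid_grading (k : comPzRingType) (R : algType k)
    (S : Type) (one : S) (op : S -> S -> option S) (Rg : S -> R -> Prop) : Prop :=
  (forall g, Rg g 0 /\ (forall x y, Rg g x -> Rg g y -> Rg g (x + y)) /\
             (forall (c : k) x, Rg g x -> Rg g (c *: x))) /\
  (* the canonical map (+)_g R_g -> R is surjective *)
  (forall r : R, exists l : seq (S * R),
      (forall p, List.In p l -> Rg p.1 p.2) /\ r = \sum_(p <- l) p.2) /\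
  (* ... and injective *)
  (forall l : seq (S * R), List.NoDup (map fst l) ->
      (forall p, List.In p l -> Rg p.1 p.2) -> \sum_(p <- l) p.2 = 0 ->
      forall p, List.In p l -> p.2 = 0) /\
  Rg one 1 /\
  (forall g h, (exists a b, Rg g a /\ Rg h b /\ a * b != 0) ->
     exists u, op g h = Some u /\ forall a b, Rg g a -> Rg h b -> Rg u (a * b)).

Definition reduced (R : pzRingType) : Prop :=
  forall (x : R) (n : nat), x ^+ n = 0 -> x = 0.

Definition sub_domain (R : pzRingType) (P : R -> Prop) : Prop :=
  (1 : R) != 0 /\ forall a b, P a -> P b -> a * b = 0 -> a = 0 \/ b = 0.

Definition sub_field (R : pzRingType) (P : R -> Prop) : Prop :=
  (1 : R) != 0 /\ (forall a b, P a -> P b -> a * b = b * a) /\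
  (forall a, P a -> a != 0 -> exists b, P b /\ a * b = 1 /\ b * a = 1).

(* Main.v *)
Require Import Defs.
From HB Require Import structures.
From mathcomp Require Import all_boot all_order all_algebra.
From mathcomp Require Import zify.
From Stdlib Require Import Classical.
Import GRing.Theory.
Local Open Scope ring_scope.
Set Implicit Arguments. Unset Strict Implicit. Unset Printing Implicit Defensive.

Lemma In_map (A B : Type) (f : A -> B) (l : seq A) a :
  List.In a l -> List.In (f a) (map f l).
Proof. elim: l => [|b l IH] //= [->|H]; [left|right; exact: IH]; done. Qed.

Lemma In_map_inv (A B : Type) (f : A -> B) (l : seq A) b :
  List.In b (map f l) -> exists a, List.In a l /\ b = f a.
Proof.
elim: l => [|c l IH] //= [<-|H]; first by exists c; split => //; left.
have [a [Ha ->]] := IH H; exists a; split => //; by right.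
Qed.

Lemma In_split_seq (A : Type) (l : seq A) a :
  List.In a l -> exists l1 l2, l = l1 ++ a :: l2.
Proof.
elim: l => [|b l IH] //= [->|H]; first by exists [::], l.
have [l1 [l2 ->]] := IH H; by exists (b :: l1), l2.
Qed.

Lemma In_cat (A : Type) (l1 l2 : seq A) a :
  List.In a (l1 ++ l2) -> List.In a l1 \/ List.In a l2.
Proof.
elim: l1 => [|b l IH] /=; first by right.
case=> [->|H]; first by left; left.
case: (IH H) => H'; [left; right|right] => //.
Qed.

Lemma In_cat_inv (A : Type) (l1 l2 : seq A) a :
  List.In a l1 \/ List.In a l2 -> List.In a (l1 ++ l2).
Proof.
elim: l1 => [|b l IH] /=; first by case.
case=> [[->|H]|H]; [by left | right; apply: IH; left | right; apply: IH; right] => //.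
Qed.

Lemma map_fst_cat (A B : Type) (l1 l2 : seq (A * B)) p q :
  p.1 = q.1 -> map fst (l1 ++ p :: l2) = map fst (l1 ++ q :: l2).
Proof. move=> E; by rewrite !map_cat /= E. Qed.

Section Main.
Variables (k : comPzRingType) (R : algType k) (S : Type) (one : S)
  (op : S -> S -> option S) (Rg : S -> R -> Prop).
Hypothesis Hgrid : is_grid one op.
Hypothesis Hred : reduced R.
Hypothesis Hgr : grid_grading one op Rg.

Definition Xs := fun g => exists x, Rg g x /\ x != 0.

Lemma Rg0 g : Rg g 0.
Proof. by case: Hgr => H _; case: (H g). Qed.
Lemma RgD g a b : Rg g a -> Rg g b -> Rg g (a + b).
Proof. case: Hgr => H _; case: (H g) => _ [HD _]; exact: HD. Qed.
Lemma RgN g a : Rg g a -> Rg g (- a).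
Proof. case: Hgr => H _; case: (H g) => _ [_ HZ] Ha. rewrite -scaleN1r; exact: HZ. Qed.
Lemma Rg1 : Rg one 1.
Proof. by case: Hgr => _ [_ [_ [H _]]]. Qed.

Lemma mul_grade g h a b : Rg g a -> Rg h b -> a * b != 0 ->
  exists u, op g h = Some u /\ Rg u (a * b).
Proof.
case: Hgr => _ [_ [_ [_ H]]] Ha Hb Hab.
have [|u [Hu H']] := H g h; first by exists a, b.
by exists u; split => //; apply: H'.
Qed.

Lemma grade_uniq u v z : Rg u z -> Rg v z -> z != 0 -> u = v.
Proof.
move=> Hu Hv Hz; apply: NNPP => Huv.
case: Hgr => _ [_ [Hinj _]].
have := Hinj [:: (u, z); (v, - z)].
have Hnd : List.NoDup (map fst [:: (u, z); (v, - z)]).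
  constructor; last by constructor; [done|constructor].
  by case => // E; apply: Huv.
move=> /(_ Hnd) H.
have := H _ _ (u, z) (or_introl erefl).
move=> H1; move/eqP: Hz; apply; apply: H1.
- by move=> p [<-|[<-|]] //=; apply: RgN.
- by rewrite !big_cons big_nil /= addr0 subrr.
Qed.

Lemma mul_gradeS g h u a b : Rg g a -> Rg h b -> op g h = Some u -> Rg u (a * b).
Proof.
move=> Ha Hb Hop. have [->|Hab] := eqVneq (a * b) 0; first exact: Rg0.
have [u' [Hu' H']] := mul_grade Ha Hb Hab.
by rewrite Hop in Hu'; case: Hu' => ->.
Qed.

Lemma mul_one_l a h b : Rg one a -> Rg h b -> Rg h (a * b).
Proof. case: Hgrid => H1 _ Ha Hb; exact: mul_gradeS Ha Hb (H1 h). Qed.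

Definition gp g i := odflt one (gpow one op g i).

Lemma xpow_neq0 (x : R) i : x != 0 -> x ^+ i != 0.
Proof. move=> Hx0; apply/eqP => H; move/eqP: Hx0; apply; exact: Hred H. Qed.

Section Pow.
Variables (g : S) (x : R).
Hypotheses (Hx : Rg g x) (Hx0 : x != 0).

Lemma gpow_spec i : exists u, gpow one op g i = Some u /\ Rg u (x ^+ i).
Proof.
elim: i => [|i [u [Hu Hr]]]; first by exists one; split => //; rewrite expr0; exact Rg1.
have := mul_grade Hr Hx; rewrite -exprSr => H.
have [v [Hv Hrv]] := H (xpow_neq0 i.+1 Hx0).
by exists v; split => //=; rewrite Hu.
Qed.

Lemma gpE i : gpow one op g i = Some (gp g i).
Proof. rewrite /gp; by have [u [-> _]] := gpow_spec i. Qed.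
Lemma Rg_gp i : Rg (gp g i) (x ^+ i).
Proof. rewrite /gp; by have [u [-> H]] := gpow_spec i. Qed.
Lemma gp1 : gp g 1 = g.
Proof. case: Hgrid => H1 _; by rewrite /gp /= H1. Qed.

Lemma op_gp i j : op (gp g i) (gp g j) = Some (gp g (i + j)).
Proof.
have := mul_grade (Rg_gp i) (Rg_gp j). rewrite -exprD => H.
have [u [Hu Hr]] := H (xpow_neq0 _ Hx0). rewrite Hu; congr Some.
exact: grade_uniq Hr (Rg_gp _) (xpow_neq0 _ Hx0).
Qed.

Lemma gp_shift a b c : gp g a = gp g b -> gp g (a + c) = gp g (b + c).
Proof. move=> E. have := op_gp a c. rewrite E op_gp. by case. Qed.

Lemma gen_gp s : gen_subgrid one op (eq g) s <-> exists i, s = gp g i.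
Proof.
split.
- move=> H; apply: (H (fun s => exists i, s = gp g i)); last by move=> y <-; exists 1%N; rewrite gp1.
  split; first by exists 0%N.
  move=> s1 t u [i ->] [j ->]; rewrite op_gp; case => <-; by exists (i + j)%N.
- case=> i ->; move=> T [T1 TC] Hy. elim: i => [|i IH]; first exact: T1.
  rewrite -addn1. apply: TC IH _ (op_gp i 1). rewrite gp1; exact: Hy.
Qed.

Lemma Xs_gp i : Xs (gp g i).
Proof. exists (x ^+ i); split; [exact: Rg_gp | exact: xpow_neq0]. Qed.

End Pow.

Lemma pigeon (f : nat -> S) l : (forall i, List.In (f i) l) ->
  exists i j, (i < j)%N /\ f i = f j.
Proof.
elim: l f => [|a l IH] f Hf; first by case: (Hf 0%N).
case: (classic (exists i j, (i < j)%N /\ f i = a /\ f j = a)) => [[i [j [Hij [Hi Hj]]]]|Hn].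
  by exists i, j; split => //; rewrite Hi Hj.
case: (classic (exists i0, f i0 = a)) => [[i0 Hi0]|Hn0].
- have Hf' : forall i, List.In (f (i + i0.+1)%N) l.
    move=> i; case: (Hf (i + i0.+1)%N) => // E. exfalso; apply: Hn.
    exists i0, (i + i0.+1)%N; split => //; lia.
  have [i [j [Hij E]]] := IH _ Hf'. exists (i + i0.+1)%N, (j + i0.+1)%N; split => //; lia.
- have Hf' : forall i, List.In (f i) l.
    move=> i; case: (Hf i) => // E; exfalso; apply: Hn0; by exists i.
  exact: IH.
Qed.

Lemma gp_order g x : Rg g x -> x != 0 -> finite_set Xs ->
  exists n, (0 < n)%N /\ gp g n = one.
Proof.
move=> Hx Hx0 [l Hl].
have [i [j [Hij E]]] := pigeon (fun i => Hl _ (Xs_gp Hx Hx0 i)).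
set d := (j - i)%N.
have Hper : forall c, gp g (i + c + d)%N = gp g (i + c)%N.
  move=> c; have := gp_shift Hx Hx0 c (esym E).
  by rewrite (_ : (j + c = i + c + d)%N) //; rewrite /d; lia.
have Hd : (0 < d)%N by rewrite /d; lia.
set m := (d * i.+1)%N.
have Hmi : (i < m)%N by rewrite /m; rewrite leq_pmull.
have Hm : forall t, gp g (m + d * t)%N = gp g m.
  elim=> [|t IH]; first by rewrite muln0 addn0.
  have -> : (m + d * t.+1 = i + (m - i + d * t) + d)%N.
    rewrite mulnS; set dt := (d * t)%N; lia.
  rewrite Hper -IH; congr gp; lia.
exists m; split; first lia.
case: Hgrid => _ [_ H2]; apply: H2.
by rewrite (op_gp Hx Hx0) {2}/m Hm.
Qed.

Lemma gp_mul_n g x n : Rg g x -> x != 0 -> gp g n = one -> forall i, gp g (i * n) = one.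
Proof.
move=> Hx Hx0 Hn; elim=> [|i IH]; first by rewrite mul0n.
rewrite mulSnr addnC.
have := gp_shift Hx Hx0 (i * n) (a := n) (b := 0) Hn.
by rewrite add0n IH.
Qed.

Lemma order_facts g x : Rg g x -> x != 0 -> finite_set Xs ->
  exists n', Rg one (x ^+ n'.+1) /\ op g (gp g n') = Some one /\
    op (gp g n') g = Some one /\ Rg (gp g n') (x ^+ n') /\ x ^+ n'.+1 != 0 /\ x ^+ n' != 0.
Proof.
move=> Hx Hx0 HX. have [[|n'] [Hn E]] := gp_order Hx Hx0 HX => //.
exists n'. split; first by rewrite -E; exact: Rg_gp.
split; first by rewrite -{1}(gp1 g) (op_gp Hx Hx0) add1n E.
split; first by rewrite -{2}(gp1 g) (op_gp Hx Hx0) addn1 E.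
split; first exact: Rg_gp.
by split; apply: xpow_neq0.
Qed.


Lemma sum_zero (l : seq (S * R)) : (forall p, List.In p l -> p.2 = 0) ->
  \sum_(p <- l) p.2 = 0.
Proof.
elim: l => [|q l IH] H; first by rewrite big_nil.
rewrite big_cons H ?IH ?addr0 //; [move=> p Hp; apply: H; by right | by left].
Qed.

Lemma decomp_list (l : seq (S * R)) : (forall p, List.In p l -> Rg p.1 p.2) ->
  exists l', List.NoDup (map fst l') /\ (forall p, List.In p l' -> Rg p.1 p.2) /\
    \sum_(p <- l) p.2 = \sum_(p <- l') p.2.
Proof.
elim: l => [|[g x] l IH] Hc; first by exists [::]; split; [constructor | split].
have [l' [Hnd [Hc' Hs]]] := IH (fun p Hp => Hc p (or_intror Hp)).
have Hgx : Rg g x := Hc (g, x) (or_introl erefl).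
case: (classic (exists p, List.In p l' /\ p.1 = g)) => [[p [Hp Hpg]]|Hn].
- have [l1 [l2 El]] := In_split_seq Hp. subst l'.
  exists (l1 ++ (g, p.2 + x) :: l2). split; [|split].
  + by rewrite (@map_fst_cat _ _ _ _ _ p).
  + have Hc2 : forall q, List.In q l1 \/ List.In q (p :: l2) -> Rg q.1 q.2.
      by move=> q Hq; apply: (Hc'); apply: In_cat_inv.
    move=> q Hq; case: (In_cat Hq) => [Hq1|[Hq2|Hq2]].
    * exact: (Hc2 q (or_introl Hq1)).
    * subst q => /=; apply: RgD => //; rewrite -Hpg; exact: (Hc2 p (or_intror (or_introl erefl))).
    * exact: (Hc2 q (or_intror (or_intror Hq2))).
  + rewrite big_cons Hs !big_cat !big_cons /=.
    rewrite !addrA; congr (_ + _); by rewrite (addrC x) -addrA (addrC x) addrA.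
- exists ((g, x) :: l'). split; [|split].
  + constructor => //. move=> Hin; have [q [Hq E]] := In_map_inv Hin; apply: Hn; by exists q.
  + by move=> q [<-|Hq] //; apply: Hc'.
  + by rewrite !big_cons Hs.
Qed.

Lemma decomp r : exists l : seq (S * R), List.NoDup (map fst l) /\
  (forall p, List.In p l -> Rg p.1 p.2) /\ r = \sum_(p <- l) p.2.
Proof.
case: Hgr => _ [Hs _]. have [l [Hc ->]] := Hs r.
have [l' [H1 [H2 H3]]] := decomp_list Hc. by exists l'.
Qed.

Lemma dom_mul (Hd : sub_domain (Rg one)) (HX : finite_set Xs) a h z :
  Rg one a -> a != 0 -> Rg h z -> z != 0 -> a * z != 0 /\ z * a != 0.
Proof.
move=> Ha Ha0 Hz Hz0.
have [n' [Hzn [_ [_ [_ [Hzn0 _]]]]]] := order_facts Hz Hz0 HX.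
case: Hd => _ Hd.
split; apply/eqP => E.
- have : a * z ^+ n'.+1 = 0 by rewrite exprS mulrA E mul0r.
  move/(Hd _ _ Ha Hzn) => [H|H]; [by move: Ha0; rewrite H eqxx | by move: Hzn0; rewrite H eqxx].
- have : z ^+ n'.+1 * a = 0 by rewrite exprSr -mulrA E mulr0.
  move/(Hd _ _ Hzn Ha) => [H|H]; [by move: Hzn0; rewrite H eqxx | by move: Ha0; rewrite H eqxx].
Qed.

Lemma reg_one (Hd : sub_domain (Rg one)) (HX : finite_set Xs) a y :
  Rg one a -> a != 0 -> (a * y = 0 -> y = 0) /\ (y * a = 0 -> y = 0).
Proof.
move=> Ha Ha0.
have [l [Hnd [Hc ->]]] := decomp y. case: Hgr => _ [_ [Hinj _]].
split => E; apply: sum_zero => p Hp; apply: NNPP => Hp0; have Hp0' : p.2 != 0 by apply/eqP.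
- set f := fun p : S * R => (p.1, a * p.2).
  have Hnd' : List.NoDup (map fst (map f l)) by rewrite -map_comp.
  have Hc2 : forall q, List.In q (map f l) -> Rg q.1 q.2.
    move=> q Hq; have [q' [Hq' ->]] := In_map_inv Hq; exact: mul_one_l (Hc _ Hq').
  have Hs : \sum_(q <- map f l) q.2 = 0 by rewrite big_map /= -mulr_sumr.
  have H := Hinj _ Hnd' Hc2 Hs _ (In_map f Hp).
  have [+ _] := dom_mul Hd HX Ha Ha0 (Hc _ Hp) Hp0'. by move: H; rewrite /f /= => ->; rewrite eqxx.
- set f := fun p : S * R => (p.1, p.2 * a).
  have Hnd' : List.NoDup (map fst (map f l)) by rewrite -map_comp.
  have Hc2 : forall q, List.In q (map f l) -> Rg q.1 q.2.
    move=> q Hq; have [q' [Hq' ->]] := In_map_inv Hq.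
    case: Hgrid => _ [H2 _]; exact: mul_gradeS (Hc _ Hq') Ha (H2 _).
  have Hs : \sum_(q <- map f l) q.2 = 0 by rewrite big_map /= -mulr_suml.
  have H := Hinj _ Hnd' Hc2 Hs _ (In_map f Hp).
  have [_ +] := dom_mul Hd HX Ha Ha0 (Hc _ Hp) Hp0'. by move: H; rewrite /f /= => ->; rewrite eqxx.
Qed.

Lemma reg (Hd : sub_domain (Rg one)) (HX : finite_set Xs) g x y :
  Rg g x -> x != 0 -> (x * y = 0 -> y = 0) /\ (y * x = 0 -> y = 0).
Proof.
move=> Hx Hx0.
have [n' [Ha [_ [_ [_ [Ha0 _]]]]]] := order_facts Hx Hx0 HX.
have [H1 H2] := reg_one Hd HX y Ha Ha0.
split => E; [apply: H1 | apply: H2].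
- by rewrite exprSr -mulrA E mulr0.
- by rewrite exprS mulrA E mul0r.
Qed.

Lemma Xs_mul (Hd : sub_domain (Rg one)) (HX : finite_set Xs) a b x y :
  Rg a x -> x != 0 -> Rg b y -> y != 0 -> x * y != 0.
Proof.
move=> Hx Hx0 Hy Hy0; apply/eqP => E.
have [H1 _] := reg Hd HX y Hx Hx0. by move: Hy0; rewrite H1 ?eqxx.
Qed.

Lemma inv_field (Hf : sub_field (Rg one)) (HX : finite_set Xs) g x :
  Rg g x -> x != 0 ->
  exists g' y, op g g' = Some one /\ op g' g = Some one /\
    Rg g' y /\ x * y = 1 /\ y * x = 1.
Proof.
move=> Hx Hx0.
have [n' [Ha [Hop1 [Hop2 [Hxn [Ha0 _]]]]]] := order_facts Hx Hx0 HX.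
case: Hf => _ [_ Hinv]. have [b [Hb [Hab Hba]]] := Hinv _ Ha Ha0.
have Hyx : b * x ^+ n' * x = 1 by rewrite -mulrA -exprSr.
have Hxy' : x * (x ^+ n' * b) = 1 by rewrite mulrA -exprS.
have Hyy : b * x ^+ n' = x ^+ n' * b.
  by rewrite -[b * _]mulr1 -Hxy' !mulrA Hyx mul1r.
exists (gp g n'), (b * x ^+ n'); split => //; split => //; split.
  exact: mul_one_l.
by split; [rewrite Hyy|].
Qed.

Lemma main_sec :
  let X := fun g => exists x, Rg g x /\ x != 0 in
  finite_set X ->
  (forall g, X g ->
     (forall s, gen_subgrid one op (eq g) s -> X s) /\
     is_group_on one op (gen_subgrid one op (eq g)) /\
     finite_set (gen_subgrid one op (eq g)) /\
     is_cyclic_on one op (gen_subgrid one op (eq g))) /\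
  (sub_domain (Rg one) ->
     (forall g x, Rg g x -> x != 0 ->
        forall y : R, (x * y = 0 -> y = 0) /\ (y * x = 0 -> y = 0)) /\
     (forall s, X s <-> gen_subgrid one op X s) /\
     is_group_on one op X /\
     ((forall a b : R, a * b = b * a) -> is_abelian_on op X)) /\
  (sub_field (Rg one) ->
     (forall g x, Rg g x -> x != 0 ->
        exists g' y, op g g' = Some one /\ op g' g = Some one /\
                     Rg g' y /\ x * y = 1 /\ y * x = 1) /\
     (forall g, X g ->
        exists e, Rg g e /\ e != 0 /\
          (forall x, Rg g x -> exists a, Rg one a /\ x = a * e) /\
          (forall a, Rg one a -> a * e = 0 -> a = 0))).
Proof.
move=> X HX. have HX' : finite_set Xs := HX.
split; [|split].
- move=> g [x [Hx Hx0]].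
  have [n [Hn En]] := gp_order Hx Hx0 HX'.
  case: n Hn En => [|n'] // _ En.
  have Hinv : forall i, gp g (i + i * n') = one.
    by move=> i; rewrite -mulnS (gp_mul_n Hx Hx0 En).
  split; [|split; [|split]].
  + move=> s /(gen_gp Hx Hx0) [i ->]; exact: (Xs_gp Hx Hx0 i).
  + split; first by apply/(gen_gp Hx Hx0); exists 0%N.
    split; [|split].
    * move=> a b /(gen_gp Hx Hx0) [i ->] /(gen_gp Hx Hx0) [j ->].
      exists (gp g (i + j)); split; first exact: (op_gp Hx Hx0).
      by apply/(gen_gp Hx Hx0); exists (i + j)%N.
    * move=> a b c ab bc /(gen_gp Hx Hx0) [i ->] /(gen_gp Hx Hx0) [j ->]
        /(gen_gp Hx Hx0) [l ->].
      rewrite !(op_gp Hx Hx0) => -[<-] [<-]; by rewrite !(op_gp Hx Hx0) addnA.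
    * move=> a /(gen_gp Hx Hx0) [i ->]. exists (gp g (i * n')).
      split; first by apply/(gen_gp Hx Hx0); exists (i * n')%N.
      by rewrite !(op_gp Hx Hx0) Hinv addnC Hinv.
  + case: HX => l Hl. exists l => s /(gen_gp Hx Hx0) [i ->]; apply: Hl.
    exact: (Xs_gp Hx Hx0).
  + exists g; split; first by apply/(gen_gp Hx Hx0); exists 1%N; rewrite gp1.
    move=> t /(gen_gp Hx Hx0) [m ->]; exists m; exact: (gpE Hx Hx0).
- move=> Hd.
  have Hsub : forall a b u, X a -> X b -> op a b = Some u ->
      X u /\ forall x y, Rg a x -> x != 0 -> Rg b y -> y != 0 -> Rg u (x * y) /\ x * y != 0.
    move=> a b u [x [Hx Hx0]] [y [Hy Hy0]] Hop.
    have Hxy := Xs_mul Hd HX' Hx Hx0 Hy Hy0.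
    split; first by exists (x * y); split => //; exact: mul_gradeS Hx Hy Hop.
    move=> x' y' Hx' Hx0' Hy' Hy0'; split; [exact: mul_gradeS Hx' Hy' Hop | exact: (Xs_mul Hd HX' Hx' Hx0' Hy' Hy0')].
  have Hdef : forall a b, X a -> X b -> exists c, op a b = Some c /\ X c.
    move=> a b [x [Hx Hx0]] [y [Hy Hy0]].
    have Hxy := Xs_mul Hd HX' Hx Hx0 Hy Hy0.
    have [u [Hu Hr]] := mul_grade Hx Hy Hxy.
    by exists u; split => //; exists (x * y).
  split; [|split; [|split]].
  + move=> g x Hx Hx0 y; exact: (@reg Hd HX' g x y Hx Hx0).
  + move=> s; split; first by move=> Hs T _ HT; apply: HT.
    move=> H; apply: (H X) => //; split.
      exists 1; split; first exact: Rg1. by case: Hd.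
    move=> a b u Ha Hb Hop; exact: (Hsub a b u Ha Hb Hop).1.
  + split; first by exists 1; split; [exact: Rg1 | case: Hd].
    split; [exact: Hdef|split].
    * move=> a b c ab bc [x [Hx Hx0]] [y [Hy Hy0]] [z [Hz Hz0]] Hab Hbc.
      have [_ H1] := Hsub _ _ _ (ex_intro _ x (conj Hx Hx0)) (ex_intro _ y (conj Hy Hy0)) Hab.
      have [_ H2] := Hsub _ _ _ (ex_intro _ y (conj Hy Hy0)) (ex_intro _ z (conj Hz Hz0)) Hbc.
      have [Hxy Hxy0] := H1 _ _ Hx Hx0 Hy Hy0.
      have [Hyz Hyz0] := H2 _ _ Hy Hy0 Hz Hz0.
      have [u [Hu Hru]] := mul_grade Hxy Hz (Xs_mul Hd HX' Hxy Hxy0 Hz Hz0).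
      have [v [Hv Hrv]] := mul_grade Hx Hyz (Xs_mul Hd HX' Hx Hx0 Hyz Hyz0).
      rewrite Hu Hv; congr Some; apply: grade_uniq Hru _ (Xs_mul Hd HX' Hxy Hxy0 Hz Hz0).
      by rewrite -mulrA.
    * move=> a [x [Hx Hx0]].
      have [n' [_ [Hop1 [Hop2 [Hxn [_ Hxn0]]]]]] := order_facts Hx Hx0 HX'.
      exists (gp a n'); split => //; by exists (x ^+ n').
  + move=> Hcomm a b [x [Hx Hx0]] [y [Hy Hy0]].
    have Hxy := Xs_mul Hd HX' Hx Hx0 Hy Hy0.
    have [u [Hu Hru]] := mul_grade Hx Hy Hxy.
    have Hyx := Xs_mul Hd HX' Hy Hy0 Hx Hx0.
    have [v [Hv Hrv]] := mul_grade Hy Hx Hyx.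
    rewrite Hu Hv; congr Some; apply: grade_uniq Hru _ Hxy.
    by rewrite Hcomm.
- move=> Hf. split; first by move=> g x Hx Hx0; exact: inv_field.
  move=> g [x [Hx Hx0]]. exists x; split => //; split => //.
  have [g' [y [Hop1 [Hop2 [Hy [Hxy Hyx]]]]]] := inv_field Hf HX' Hx Hx0.
  split.
  + move=> z Hz. exists (z * y); split; first exact: mul_gradeS Hz Hy Hop1.
    by rewrite -mulrA Hyx mulr1.
  + move=> a Ha E. by rewrite -[a]mulr1 -Hxy mulrA E mul0r.
Qed.

End Main.

Theorem mainTheorem4 (k : comPzRingType) (R : algType k)
    (S : Type) (one : S) (op : S -> S -> option S) (Rg : S -> R -> Prop) :
  is_grid one op ->
  reduced R ->
  grid_grading one op Rg ->
  let X := fun g => exists x, Rg g x /\ x != 0 in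
  finite_set X ->
  (* (1) *)
  (forall g, X g ->
     (forall s, gen_subgrid one op (eq g) s -> X s) /\
     is_group_on one op (gen_subgrid one op (eq g)) /\
     finite_set (gen_subgrid one op (eq g)) /\
     is_cyclic_on one op (gen_subgrid one op (eq g))) /\
  (* (2) *)
  (sub_domain (Rg one) ->
     (forall g x, Rg g x -> x != 0 ->
        forall y : R, (x * y = 0 -> y = 0) /\ (y * x = 0 -> y = 0)) /\
     (forall s, X s <-> gen_subgrid one op X s) /\
     is_group_on one op X /\
     ((forall a b : R, a * b = b * a) -> is_abelian_on op X)) /\
  (* (3) *)
  (sub_field (Rg one) ->
     (forall g x, Rg g x -> x != 0 ->
        exists g' y, op g g' = Some one /\ op g' g = Some one /\
                     Rg g' y /\ x * y = 1 /\ y * x = 1) /\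
     (forall g, X g ->
        exists e, Rg g e /\ e != 0 /\
          (forall x, Rg g x -> exists a, Rg one a /\ x = a * e) /\
          (forall a, Rg one a -> a * e = 0 -> a = 0))).
Proof.
move=> H1 H2 H3. exact: (main_sec H1 H2 H3).
Qed.
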